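(* Let $\mathcal A,\mathcal B\subset 2^{[n]}$ be cross-IU families (for all $A\in\mathcal A$, $B\in\mathcal B$: $A\cap B\neq\emptyset$ and $A\cup B\neq[n]$) with $|\mathcal A|\ge|\mathcal B|$. Then $$|\mathcal A|+3|\mathcal B|\le 2^n.$$
   Context: $[n]=\{1,\dots,n\}$ and $2^{[n]}$ is its power set. *)

(* Defs.v *)
From mathcomp Require Import all_boot.
Set Implicit Arguments. Unset Strict Implicit. Unset Printing Implicit Defensive.

(* Ground set [n] = {1,...,n} is modelled by 'I_n = {0,...,n-1}. *)
Definition cross_IU (n : nat) (FA FB : {set {set 'I_n}}) : Prop :=
  forall A B, A \in FA -> B \in FB -> A :&: B != set0 /\ A :|: B != [set: 'I_n].

(* Main.v *)
From mathcomp Require Import all_boot zify.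
Require Import Defs.
Lemma amgm x y : 4*(x*y) <= (x+y)*(x+y).
Proof. case: (leqP x y) => h; [have [k ->] : exists k, y = x + k by exists (y-x); lia | have [k ->] : exists k, x = y + k by exists (x-y); lia]; nia. Qed.
Lemma arith a b uA uB dA dB N : a*N <= uA*dA -> b*N <= uB*dB -> uA+uB<=N -> dA+dB<=N -> b<=a -> 0 < N -> a+3*b<=N.
Proof.
move=> h1 h2 h3 h4 h5 h6.
suff: (a+3*b)*N <= N*N by rewrite leq_pmul2r.
have e2:= amgm uA dA.
case: (leqP (uA+dA) N) => hc.
- have e1: (a+3*b)*N <= 4*(uA*dA).
    have : 3*b*N <= 3*(a*N) by rewrite -mulnA leq_mul2l leq_mul2r h5 orbT.
    clear -h1; nia.
  have e3: (uA+dA)*(uA+dA) <= N*N by apply: leq_mul.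
  lia.
- have e0: uB*dB <= (N-uA)*(N-dA) by apply: leq_mul; [clear -h3; lia | clear -h4; lia].
  have e1: (a+3*b)*N <= uA*dA + 3*((N-uA)*(N-dA)) by clear -h1 h2 e0; nia.
  have [s [es hs2]] : exists s, uA + dA = N + s /\ s <= N by exists (uA+dA-N); lia.
  clear -e1 e2 es hs2 hc.
  nia.
Qed.
Section HK.
Variable T : finType.
Implicit Types (S X Y : {set T}) (F U D : {set {set T}}).
Definition upc S U := forall X Y, X \in U -> X \subset Y -> Y \subset S -> Y \in U.
Definition dnc D := forall X Y, X \in D -> Y \subset X -> Y \in D.
Definition F0 (x : T) F := [set X in F | x \notin X].
Definition F1 S (x : T) F := [set X : {set T} | (X \subset S :\ x) && ((x |: X) \in F)].

Lemma split_card S x F : F \subset powerset S -> #|F| = #|F0 x F| + #|F1 S x F|.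
Proof.
move=> FS.
have -> : #|F1 S x F| = #|[set X in F | x \in X]|.
  rewrite -(card_in_imset (f := fun X => x |: X)).
    apply: eq_card => Y; rewrite [in RHS]inE; apply/imsetP/andP.
      by case=> X; rewrite inE => /andP[_ h] ->; rewrite setU11.
    case=> YF xY; exists (Y :\ x); last by rewrite setD1K.
    rewrite inE setD1K // YF andbT setSD //.
    by move/subsetP: FS => /(_ Y YF); rewrite inE.
  move=> X1 X2; rewrite !inE => /andP[h1 _] /andP[h2 _] e.
  have n1 : x \notin X1 by apply/negP => /(subsetP h1); rewrite !inE eqxx.
  have n2 : x \notin X2 by apply/negP => /(subsetP h2); rewrite !inE eqxx.
  by rewrite -(setU1K n1) -(setU1K n2) e.
rewrite /F0 -(cardsID [set X : {set T} | x \in X] F) addnC.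
have -> : F :\: [set X : {set T} | x \in X] = [set X in F | x \notin X] by apply/setP=> X; rewrite !inE andbC.
by have -> : F :&: [set X : {set T} | x \in X] = [set X in F | x \in X] by apply/setP => X; rewrite !inE.
Qed.

Lemma subP' F S : F \subset powerset S -> forall X, X \in F -> X \subset S.
Proof. by move/subsetP=> h X /h; rewrite powersetE. Qed.
Arguments subP' {F S}.

Lemma F0_sub S x F : F \subset powerset S -> F0 x F \subset powerset (S :\ x).
Proof. move=> h; apply/subsetP=> X; rewrite !inE subsetD1 => /andP[/(subP' h) -> ->] //. Qed.
Lemma F1_sub S x F : F1 S x F \subset powerset (S :\ x).
Proof. by apply/subsetP=> X; rewrite !inE => /andP[]. Qed.
Lemma F0_up S x U : U \subset powerset S -> upc S U -> upc (S :\ x) (F0 x U).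
Proof.
move=> hs hu X Y; rewrite !inE subsetD1 => /andP[XU _] XY /andP[YS ->].
by rewrite (hu X Y).
Qed.
Lemma addx_sub S x Y : x \in S -> Y \subset S :\ x -> x |: Y \subset S.
Proof. by move=> xS; rewrite subsetD1 subUset sub1set xS => /andP[-> _]. Qed.
Lemma F1_up S x U : x \in S -> upc S U -> upc (S :\ x) (F1 S x U).
Proof.
move=> xS hu X Y; rewrite !inE => /andP[XS XU] XY YS; rewrite YS /=.
apply: (hu (x |: X)) => //; [exact: setUS | exact: addx_sub].
Qed.
Lemma F0_dn x D : dnc D -> dnc (F0 x D).
Proof.
move=> hd X Y; rewrite !inE => /andP[XD xX] YX; rewrite (hd X Y) //=.
by apply: contra xX => /(subsetP YX).
Qed.
Lemma F1_dn S x D : dnc D -> dnc (F1 S x D).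
Proof.
move=> hd X Y; rewrite !inE => /andP[XS XD] YX.
rewrite (subset_trans YX XS) /=; apply: (hd (x |: X)) => //; exact: setUS.
Qed.
Lemma F01_up S x U : x \in S -> U \subset powerset S -> upc S U -> #|F0 x U| <= #|F1 S x U|.
Proof.
move=> xS hs hu; apply: subset_leq_card; apply/subsetP=> X; rewrite !inE => /andP[XU xX].
have XS : X \subset S :\ x by rewrite subsetD1 xX (subP' hs _ XU).
rewrite XS; apply: (hu X) => //; [exact: subsetUr | exact: addx_sub].
Qed.
Lemma F10_dn S x D : dnc D -> #|F1 S x D| <= #|F0 x D|.
Proof.
move=> hd; apply: subset_leq_card; apply/subsetP=> X; rewrite !inE => /andP[XS XD].
rewrite (hd (x |: X)) ?subsetUr //=.
by move: XS; rewrite subsetD1 => /andP[].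
Qed.
Lemma F0I x U D : F0 x (U :&: D) = F0 x U :&: F0 x D.
Proof. by apply/setP=> X; rewrite !inE; case: (X \in U); case: (X \in D); case: (x \in X). Qed.
Lemma F1I S x U D : F1 S x (U :&: D) = F1 S x U :&: F1 S x D.
Proof. by apply/setP=> X; rewrite !inE; case: (X \subset _); case: (_ \in U); case: (_ \in D). Qed.

Lemma HK k : forall S U D, #|S| = k -> U \subset powerset S -> D \subset powerset S ->
  upc S U -> dnc D -> #|U :&: D| * 2 ^ k <= #|U| * #|D|.
Proof.
elim: k => [|k IH] S U D hS US DS uU dD.
  rewrite expn0 muln1; case: (posnP #|D|) => [/eqP|Dp].
    by rewrite cards_eq0 => /eqP ->; rewrite setI0 cards0.
  exact: leq_trans (subset_leq_card (subsetIl U D)) (leq_pmulr _ Dp).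
have /set0Pn [x xS] : S != set0 by rewrite -card_gt0 hS.
have hS' : #|S :\ x| = k by move: hS; rewrite (cardsD1 x S) xS add1n => -[].
have IDS : U :&: D \subset powerset S by apply: subset_trans (subsetIl _ _) US.
rewrite (split_card S x U US) (split_card S x D DS) (split_card S x _ IDS) F0I F1I.
have h0 := IH _ _ _ hS' (F0_sub S x U US) (F0_sub S x D DS) (F0_up S x U US uU) (F0_dn x D dD).
have h1 := IH _ _ _ hS' (F1_sub S x U) (F1_sub S x D) (F1_up S x U xS uU) (F1_dn S x D dD).
have c1 := F01_up S x U xS US uU.
have c2 := F10_dn S x D dD.
move: h0 h1 c1 c2.
set a0 := #|_ :&: _|; set a1 := #|_ :&: _|.
set u0 := #|F0 x U|; set u1 := #|F1 S x U|; set d0 := #|F0 x D|; set d1 := #|F1 S x D|.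
set p := 2 ^ k.
move=> h0 h1 c1 c2; rewrite expnS.
have key : u0 * d0 + u1 * d1 <= u0 * d1 + u1 * d0.
  have [e ->] : exists e, u1 = u0 + e by exists (u1 - u0); rewrite subnKC.
  have [f ->] : exists f, d0 = d1 + f by exists (d0 - d1); rewrite subnKC.
  rewrite !mulnDl !mulnDr; nia.
nia.
Qed.
End HK.
Arguments upc {T}. Arguments dnc {T}.

Section Main.
Variable n : nat.
Definition upF (F : {set {set 'I_n}}) := [set Y : {set 'I_n} | [exists X in F, X \subset Y]].
Definition dnF (F : {set {set 'I_n}}) := [set Y : {set 'I_n} | [exists X in F, Y \subset X]].

Lemma upF_up (F : {set {set 'I_n}}) : upc [set: 'I_n] (upF F).
Proof.
move=> X Y; rewrite !inE => /exists_inP[Z ZF ZX] XY _.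
by apply/exists_inP; exists Z => //; apply: subset_trans XY.
Qed.
Lemma dnF_dn (F : {set {set 'I_n}}) : dnc (dnF F).
Proof.
move=> X Y; rewrite !inE => /exists_inP[Z ZF ZX] YX.
by apply/exists_inP; exists Z => //; apply: subset_trans ZX.
Qed.
Lemma allP (F : {set {set 'I_n}}) : F \subset powerset [set: 'I_n].
Proof. by apply/subsetP=> X _; rewrite powersetE subsetT. Qed.

Lemma bnd (F : {set {set 'I_n}}) : #|F| * 2 ^ n <= #|upF F| * #|dnF F|.
Proof.
have := @HK _ _ [set: 'I_n] (upF F) (dnF F) (erefl _) (allP (upF F)) (allP (dnF F)) (@upF_up F) (@dnF_dn F).
rewrite cardsT card_ord; apply: leq_trans; rewrite leq_mul2r; apply/orP; right.
apply: subset_leq_card; apply/subsetP=> X XF; rewrite !inE.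
by apply/andP; split; apply/exists_inP; exists X.
Qed.

Lemma compl_bound (F G : {set {set 'I_n}}) :
  (forall Y, Y \in F -> ~: Y \in G -> False) -> #|F| + #|G| <= 2 ^ n.
Proof.
move=> h.
have e : #|[set ~: Y | Y in F]| = #|F| by apply: card_imset; exact: setC_inj.
have d : [set ~: Y | Y in F] :&: G = set0.
  apply/setP=> Z; rewrite !inE; apply/negP => /andP[/imsetP[Y YF ->] YG].
  exact: h YF YG.
rewrite -e -cardsUI d cards0 addn0.
have := subset_leq_card (allP ([set ~: Y | Y in F] :|: G)).
by rewrite card_powerset cardsT card_ord.
Qed.
End Main.

Theorem theorem3p3 (n : nat) (FA FB : {set {set 'I_n}}) :
  cross_IU FA FB -> #|FB| <= #|FA| -> #|FA| + 3 * #|FB| <= 2 ^ n.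
Proof.
move=> hc hle.
apply: (@arith _ _ _ _ _ _ _ (@bnd _ FA) (@bnd _ FB) _ _ hle); last by rewrite expn_gt0.
- apply: compl_bound => Y; rewrite !inE => /exists_inP[X XA XY] /exists_inP[X' XB XY'].
  have [h _] := hc X X' XA XB; move/negP: h; apply; apply/eqP/setP => z.
  rewrite !inE; apply/negP => /andP[zX zX'].
  by move: (subsetP XY' z zX'); rewrite inE (subsetP XY z zX).
- apply: compl_bound => Y; rewrite !inE => /exists_inP[X XA YX] /exists_inP[X' XB YX'].
  have [_ h] := hc X X' XA XB; move/negP: h; apply; apply/eqP/setP => z.
  rewrite !inE; case zY: (z \in Y).
    by rewrite (subsetP YX z zY).
  have : z \in ~: Y by rewrite inE zY.
  by move/(subsetP YX') ->; rewrite orbT.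
Qed.
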